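(* Let $t>0$ and $\beta>1$. Then the function $h\mapsto\tilde l(t,\beta,h)$ is strictly convex and monotone decreasing on $(0,1]$, and \[ \tilde l_h(t,\beta,h)=\sqrt{1-\tilde\sigma^2(t,\beta,h)}+\tilde\sigma(t,\beta,h)-\sqrt2 . \]
   Context: For $t\ge 0$ let $q(t)=\lfloor t+1\rfloor/2$ if $\lfloor t\rfloor$ is odd and $q(t)=t-\lfloor t\rfloor/2$ if $\lfloor t\rfloor$ is even. For $0<h\le1$ let $p(t,h)=t+h-q(t)$. For $\beta>1$ let $\tilde\sigma(t,\beta,h)\in(0,1)$ be the unique solution $\sigma$ of $\frac{p(t,h)\sigma}{\sqrt{1-\sigma^2}}+\frac{q(t)\sigma}{\sqrt{\beta^2-\sigma^2}}=h$, and \[ \tilde l(t,\beta,h)=\frac{p(t,h)}{\sqrt{1-\tilde\sigma^2}}+\frac{\beta^2q(t)}{\sqrt{\beta^2-\tilde\sigma^2}}-t-h\sqrt2,\qquad\tilde\sigma=\tilde\sigma(t,\beta,h); \] $\tilde l_h$ denotes the partial derivative with respect to $h$. *)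

(* Defs.v *)
From Stdlib Require Import Reals Lra ZArith ClassicalEpsilon.
From Coquelicot Require Import Coquelicot.
Open Scope R_scope.

Definition fl (t : R) : Z := Int_part t.

Definition q (t : R) : R :=
  if Z.odd (fl t) then IZR (Int_part (t + 1)) / 2
  else t - IZR (fl t) / 2.

Definition p (t h : R) : R := t + h - q t.

Definition sigma_eq (t beta h s : R) : R :=
  p t h * s / sqrt (1 - s ^ 2) + q t * s / sqrt (beta ^ 2 - s ^ 2).

(* sigma tilde(t,beta,h): the (unique) solution sigma in (0,1) of
   sigma_eq t beta h sigma = h, chosen by Hilbert's epsilon. *)
Definition sigmat (t beta h : R) : R :=
  epsilon (inhabits 0)
    (fun s => 0 < s < 1 /\ sigma_eq t beta h s = h).

Definition lt_ (t beta h : R) : R :=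
  let s := sigmat t beta h in
  p t h / sqrt (1 - s ^ 2) + beta ^ 2 * q t / sqrt (beta ^ 2 - s ^ 2)
  - t - h * sqrt 2.

(* Main.v *)
Require Import Defs.
From Stdlib Require Import Reals Lra Lia Psatz ZArith ClassicalEpsilon.
From Stdlib Require Ranalysis5.
From Coquelicot Require Import Coquelicot.
Open Scope R_scope.

Lemma q_bounds t : 0 < t -> 0 < q t /\ q t <= t.
Proof.
  intros ht. unfold q, fl.
  destruct (base_Int_part t) as [H1 H2].
  assert (hk : (-1 < Int_part t)%Z) by (apply lt_IZR; simpl; lra).
  destruct (Z.odd (Int_part t)) eqn:Ho.
  - destruct (base_Int_part (t+1)) as [H3 H4].
    assert (e1 : (Int_part (t+1) < Int_part t + 2)%Z)
      by (apply lt_IZR; rewrite plus_IZR; simpl; lra).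
    assert (e2 : (Int_part t < Int_part (t+1))%Z)
      by (apply lt_IZR; lra).
    assert (e : Int_part (t+1) = (Int_part t + 1)%Z) by lia.
    assert (k1 : (1 <= Int_part t)%Z).
    { destruct (Z.eq_dec (Int_part t) 0) as [E|E]; [rewrite E in Ho; discriminate|lia]. }
    apply IZR_le in k1. rewrite e, plus_IZR. simpl in *. lra.
  - assert (k0 : (0 <= Int_part t)%Z) by lia. apply IZR_le in k0. simpl in *. lra.
Qed.

Definition Sp t beta h s := 0 < s < 1 /\ sigma_eq t beta h s = h.

Lemma p_ge t h : 0 < t -> p t h >= h.
Proof. intros; unfold p; destruct (q_bounds t); lra. Qed.

Lemma exists_sol t beta h : 0 < t -> 1 < beta -> 0 < h -> exists s, Sp t beta h s.
Proof.
  intros ht hb hh.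
  destruct (q_bounds t ht) as [hq1 hq2].
  pose proof (p_ge t h ht) as hp.
  set (c := sqrt (1/2)).
  assert (hc2 : c * c = 1/2) by (apply sqrt_sqrt; lra).
  assert (hc : 0 < c) by (apply sqrt_lt_R0; lra).
  assert (cont : forall s, 0 <= s <= c -> continuity_pt (fun s => sigma_eq t beta h s - h) s).
  { intros s hs. apply continuity_pt_filterlim.
    assert (D : ex_derive (fun s => sigma_eq t beta h s - h) s).
    { unfold sigma_eq. auto_derive.
      assert (s*s <= 1/2) by nra.
      assert (0 < sqrt (1 + - (s * (s * 1)))) by (apply sqrt_lt_R0; lra).
      assert (0 < sqrt (beta * (beta * 1) + - (s * (s * 1)))) by (apply sqrt_lt_R0; nra).
      repeat split; try lra; nra. }
    exact (ex_derive_continuous _ _ D). }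
  destruct (Ranalysis5.IVT_interv _ 0 c cont hc) as [z [hz fz]].
  - unfold sigma_eq. rewrite !Rmult_0_r, !Rdiv_0_l. lra.
  - unfold sigma_eq.
    assert (e : sqrt (1 - c^2) = c).
    { replace (1 - c^2) with (c*c) by (simpl; lra). apply sqrt_square; lra. }
    rewrite e.
    assert (0 < sqrt (beta^2 - c^2)) by (apply sqrt_lt_R0; simpl; nra).
    assert (0 < q t * c / sqrt (beta ^ 2 - c ^ 2)).
    { apply Rdiv_lt_0_compat; nra. }
    replace (p t h * c / c) with (p t h) by (field; lra). lra.
  - exists z. unfold Sp. split; [|lra].
    destruct (Req_dec z 0) as [E|E].
    + subst z. unfold sigma_eq in fz. rewrite !Rmult_0_r, !Rdiv_0_l in fz. lra.
    + split; [lra|]. nra.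
Qed.

Lemma sig_spec t beta h : 0 < t -> 1 < beta -> 0 < h -> Sp t beta h (sigmat t beta h).
Proof.
  intros. unfold sigmat. apply epsilon_spec. apply exists_sol; auto.
Qed.
Lemma dec t beta h s : 0 < t -> 1 < beta -> 0 < h -> Sp t beta h s ->
  0 < s /\ s < 1 /\ 0 < sqrt (1 - s^2) /\ sqrt (1 - s^2) * sqrt (1 - s^2) + s*s = 1 /\
  0 < sqrt (beta^2 - s^2) /\ sqrt (beta^2 - s^2) * sqrt (beta^2 - s^2) + s*s = beta^2 /\
  s < sqrt (1 - s^2) /\
  h = p t h * s / sqrt (1 - s^2) + q t * s / sqrt (beta^2 - s^2).
Proof.
  intros ht hb hh [[s0 s1] E].
  destruct (q_bounds t ht) as [hq1 hq2].
  pose proof (p_ge t h ht) as hp.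
  assert (ha : 0 < sqrt (1 - s^2)) by (apply sqrt_lt_R0; simpl; nra).
  assert (hb2 : 0 < sqrt (beta^2 - s^2)) by (apply sqrt_lt_R0; simpl; nra).
  assert (ea : sqrt (1 - s^2) * sqrt (1 - s^2) = 1 - s^2) by (apply sqrt_sqrt; simpl; nra).
  assert (eb : sqrt (beta^2 - s^2) * sqrt (beta^2 - s^2) = beta^2 - s^2) by (apply sqrt_sqrt; simpl; nra).
  unfold sigma_eq in E.
  set (a := sqrt (1 - s^2)) in *. set (b := sqrt (beta^2 - s^2)) in *.
  set (P := p t h) in *.
  assert (ea' : a*a + s*s = 1) by (rewrite ea; simpl; ring).
  assert (eb' : b*b + s*s = beta^2) by (rewrite eb; simpl; ring).
  repeat split; try lra.
  destruct (Rlt_or_le s a) as [l|l]; auto. exfalso.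
  assert (E2 : P * s * b + q t * s * a = h * a * b).
  { rewrite <- E. field. lra. }
  assert (P*s >= h*a) by nra.
  assert (P*s*b >= h*a*b) by nra.
  assert (q t * s * a > 0) by (apply Rmult_gt_0_compat; nra).
  lra.
Qed.

Lemma cs_ineq B a s c x : a*a+s*s = B -> c*c+x*x = B -> 0 < B -> 0<=a -> 0<=s -> 0<=c -> 0<=x ->
  a*c+x*s <= B /\ (x <> s -> a*c+x*s < B).
Proof.
  intros e1 e2 hB h1 h2 h3 h4.
  assert (I : (a*c+x*s)^2 + (a*x - c*s)^2 = B*B).
  { rewrite <- e1 at 1. rewrite <- e2. ring. }
  assert (X0 : 0 <= a*c+x*s) by (apply Rplus_le_le_0_compat; apply Rmult_le_pos; auto).
  assert (X2 : (a*c+x*s)*(a*c+x*s) <= B*B) by (pose proof (pow2_ge_0 (a*x-c*s)); assert ((a*c+x*s)^2 = (a*c+x*s)*(a*c+x*s)) by ring; lra).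
  assert (le : a*c+x*s <= B).
  { destruct (Rle_or_lt (a*c+x*s) B) as [l|l]; auto.
    assert (B*B < (a*c+x*s)*(a*c+x*s)) by (apply Rmult_le_0_lt_compat; lra). lra. }
  split; auto. intros nx.
  destruct (Rle_lt_or_eq_dec _ _ le) as [l|e]; auto. exfalso.
  assert (z : a*x - c*s = 0) by (rewrite e in I; nra).
  assert (z2 : (a*x)*(a*x) = (c*s)*(c*s)) by (replace (a*x) with (c*s) by lra; ring).
  assert (x*x = s*s) by nra.
  apply nx. nra.
Qed.

Definition Hf t beta x h := p t h * sqrt (1 - x^2) + q t * sqrt (beta^2 - x^2) + x*h - t - h*sqrt 2.
Definition Df t beta h := sqrt (1 - sigmat t beta h ^2) + sigmat t beta h - sqrt 2.

Lemma H_le t beta h x : 0 < t -> 1 < beta -> 0 < h -> 0 <= x < 1 ->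
  Hf t beta x h <= lt_ t beta h /\ (x <> sigmat t beta h -> Hf t beta x h < lt_ t beta h).
Proof.
  intros ht hb hh hx.
  destruct (dec t beta h _ ht hb hh (sig_spec t beta h ht hb hh)) as (s0 & s1 & ha & ea & hb0 & eb & sa & Eh).
  destruct (q_bounds t ht) as [hq1 hq2].
  pose proof (p_ge t h ht) as hp.
  unfold lt_, Hf. cbv zeta.
  set (s := sigmat t beta h) in *.
  set (a := sqrt (1 - s^2)) in *. set (b := sqrt (beta^2 - s^2)) in *.
  assert (ec : sqrt (1 - x^2) * sqrt (1 - x^2) + x*x = 1)
    by (rewrite sqrt_sqrt; simpl; nra).
  assert (ed : sqrt (beta^2 - x^2) * sqrt (beta^2 - x^2) + x*x = beta^2)
    by (rewrite sqrt_sqrt; simpl; nra).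
  assert (hc : 0 <= sqrt (1 - x^2)) by apply sqrt_pos.
  assert (hd : 0 <= sqrt (beta^2 - x^2)) by apply sqrt_pos.
  set (c := sqrt (1 - x^2)) in *. set (d := sqrt (beta^2 - x^2)) in *.
  set (P := p t h) in *. set (Q := q t) in *.
  destruct (cs_ineq 1 a s c x) as [C1 C2]; try lra.
  destruct (cs_ineq (beta^2) b s d x) as [C3 C4]; try lra; try (simpl; nra).
  assert (Id : P / a + beta ^ 2 * Q / b - (P*c + Q*d + x*h)
     = P*(1-(a*c+x*s))/a + Q*(beta^2 - (b*d+x*s))/b).
  { rewrite Eh. field. lra. }
  assert (T2 : 0 <= Q*(beta^2 - (b*d+x*s))/b).
  { apply Rmult_le_pos; [apply Rmult_le_pos; lra| left; apply Rinv_0_lt_compat; lra]. }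
  split.
  - assert (T1 : 0 <= P*(1-(a*c+x*s))/a).
    { apply Rmult_le_pos; [apply Rmult_le_pos; lra| left; apply Rinv_0_lt_compat; lra]. }
    lra.
  - intros nx. specialize (C2 nx).
    assert (T1 : 0 < P*(1-(a*c+x*s))/a).
    { apply Rmult_lt_0_compat; [apply Rmult_lt_0_compat; lra| apply Rinv_0_lt_compat; lra]. }
    lra.
Qed.

Lemma l_eq_H t beta h : 0 < t -> 1 < beta -> 0 < h ->
  lt_ t beta h = Hf t beta (sigmat t beta h) h.
Proof.
  intros ht hb hh.
  destruct (dec t beta h _ ht hb hh (sig_spec t beta h ht hb hh)) as (s0 & s1 & ha & ea & hb0 & eb & sa & Eh).
  unfold lt_, Hf. cbv zeta.
  set (s := sigmat t beta h) in *.
  set (a := sqrt (1 - s^2)) in *. set (b := sqrt (beta^2 - s^2)) in *.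
  set (P := p t h) in *. set (Q := q t) in *.
  assert (Id : P / a + beta ^ 2 * Q / b - (P*a + Q*b + s*h)
     = P*(1-(a*a+s*s))/a + Q*(beta^2 - (b*b+s*s))/b).
  { rewrite Eh. field. lra. }
  rewrite ea, eb in Id. 
  replace (P*(1-1)/a + Q*(beta^2-beta^2)/b) with 0 in Id by (field; lra).
  lra.
Qed.

Lemma H_aff t beta x h h' : Hf t beta x h' = Hf t beta x h + (h' - h) * (sqrt (1 - x^2) + x - sqrt 2).
Proof. unfold Hf, p. ring. Qed.

Lemma subgrad t beta x y : 0 < t -> 1 < beta -> 0 < x -> 0 < y ->
  lt_ t beta x + (y - x) * Df t beta x <= lt_ t beta y /\
  (sigmat t beta x <> sigmat t beta y -> lt_ t beta x + (y - x) * Df t beta x < lt_ t beta y).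
Proof.
  intros ht hb hx hy.
  destruct (sig_spec t beta x ht hb hx) as [[s0 s1] _].
  rewrite (l_eq_H t beta x ht hb hx).
  unfold Df. rewrite <- (H_aff t beta (sigmat t beta x) x y).
  destruct (H_le t beta y (sigmat t beta x) ht hb hy) as [A B]; [lra|].
  split; auto.
Qed.

Lemma inj t beta x y : 0 < t -> 1 < beta -> 0 < x -> 0 < y ->
  sigmat t beta x = sigmat t beta y -> x = y.
Proof.
  intros ht hb hx hy E.
  destruct (dec t beta x _ ht hb hx (sig_spec t beta x ht hb hx)) as (s0 & s1 & ha & ea & hb0 & eb & sa & Ex).
  destruct (dec t beta y _ ht hb hy (sig_spec t beta y ht hb hy)) as (_ & _ & _ & _ & _ & _ & _ & Ey).
  rewrite <- E in Ey.
  set (s := sigmat t beta x) in *.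
  set (a := sqrt (1 - s^2)) in *. set (b := sqrt (beta^2 - s^2)) in *.
  unfold p in Ex, Ey.
  replace ((t + x - q t) * s / a) with ((t + x - q t) * (s / a)) in Ex by (unfold Rdiv; ring).
  replace ((t + y - q t) * s / a) with ((t + y - q t) * (s / a)) in Ey by (unfold Rdiv; ring).
  assert (Z : (y - x) * (1 - s / a) = 0).
  { set (u := s/a) in *. set (v := q t * s / b) in *.
    replace ((y-x)*(1-u)) with (y - x - ((t+y-q t)*u + v - ((t+x-q t)*u + v))) by ring. lra. }
  apply Rmult_integral in Z. destruct Z as [Z|Z]; [lra|].
  exfalso. assert (s = a).
  { assert (Z2 : a * (1 - s/a) = 0) by (rewrite Z; ring).
    replace (a * (1 - s/a)) with (a - s) in Z2 by (field; lra). lra. }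
  lra.
Qed.

Lemma D_nonpos t beta x : 0 < t -> 1 < beta -> 0 < x -> Df t beta x <= 0.
Proof.
  intros ht hb hx.
  destruct (dec t beta x _ ht hb hx (sig_spec t beta x ht hb hx)) as (s0 & s1 & ha & ea & hb0 & eb & sa & Ex).
  unfold Df. set (s := sigmat t beta x) in *. set (a := sqrt (1 - s^2)) in *.
  assert (a + s <= sqrt 2).
  { rewrite <- (sqrt_square (a+s)) by lra. apply sqrt_le_1_alt. nra. }
  lra.
Qed.

Lemma mono1 a s a' s' : 0 < a -> 0 < a' -> a*a+s*s = 1 -> a'*a'+s'*s' = 1 -> 0 <= s <= s' ->
  s'/a' - s/a >= s' - s.
Proof.
  intros ha ha' e e' hs.
  assert (a'*a' <= a*a) by nra.
  assert (a' <= a) by nra.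
  assert (a <= 1) by nra.
  assert (K : s'*a - s*a' >= (s'-s)*a*a').
  { assert (a' <= 1) by nra.
    assert (0 <= (s'-s)*a*(1-a')) by (apply Rmult_le_pos; [apply Rmult_le_pos|]; lra).
    assert (0 <= s*(a-a')) by (apply Rmult_le_pos; lra).
    nra. }
  replace (s'/a' - s/a) with ((s'*a - s*a')/(a*a')) by (field; lra).
  apply Rle_ge. apply Rmult_le_reg_r with (a*a'). nra.
  replace ((s'*a - s*a')/(a*a')*(a*a')) with (s'*a - s*a') by (field; lra). lra.
Qed.

Lemma mono2 B b s b' s' : 0 < b -> 0 < b' -> b*b+s*s = B -> b'*b'+s'*s' = B -> 0 <= s <= s' ->
  s'/b' >= s/b.
Proof.
  intros hb hb' e e' hs.
  assert (b'*b' <= b*b) by nra.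
  assert (b' <= b) by nra.
  apply Rle_ge. apply Rmult_le_reg_r with (b*b'). nra.
  replace (s/b*(b*b')) with (s*b') by (field; lra).
  replace (s'/b'*(b*b')) with (s'*b) by (field; lra). nra.
Qed.

Lemma lip_core Px Q r r' u u' x y s s' : 0 < Px -> 0 < Q -> 0 <= r' < 1 ->
  x = Px*r + Q*u -> y = (Px + (y-x))*r' + Q*u' ->
  (s <= s' -> r'-r >= s'-s /\ u' >= u) -> (s' <= s -> r - r' >= s - s' /\ u >= u') ->
  Px * Rabs (s'-s) <= Rabs (y-x).
Proof.
  intros hP hQ hr Ex Ey C1 C2.
  assert (K : Px*(r'-r) + Q*(u'-u) = (y-x)*(1-r')) by nra.
  assert (K2 : (y-x)*(1-r') <= Rabs (y-x)).
  { destruct (Rcase_abs (y-x)); [rewrite Rabs_left by lra| rewrite Rabs_right by lra]; nra. }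
  assert (K3 : -((y-x)*(1-r')) <= Rabs (y-x)).
  { destruct (Rcase_abs (y-x)); [rewrite Rabs_left by lra| rewrite Rabs_right by lra]; nra. }
  destruct (Rle_or_lt s s') as [l|l].
  - destruct (C1 l). rewrite Rabs_right by lra. nra.
  - destruct (C2 (Rlt_le _ _ l)). rewrite Rabs_left by lra. nra.
Qed.

Lemma sig_lip t beta x y : 0 < t -> 1 < beta -> 0 < x -> 0 < y ->
  p t x * Rabs (sigmat t beta y - sigmat t beta x) <= Rabs (y - x).
Proof.
  intros ht hb hx hy.
  destruct (dec t beta x _ ht hb hx (sig_spec t beta x ht hb hx)) as (s0 & s1 & ha & ea & hb0 & eb & sa & Ex).
  destruct (dec t beta y _ ht hb hy (sig_spec t beta y ht hb hy)) as (s0' & s1' & ha' & ea' & hb0' & eb' & sa' & Ey).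
  destruct (q_bounds t ht) as [hq1 hq2].
  pose proof (p_ge t x ht) as hp.
  set (s := sigmat t beta x) in *. set (s' := sigmat t beta y) in *.
  set (a := sqrt (1 - s^2)) in *. set (b := sqrt (beta^2 - s^2)) in *.
  set (a' := sqrt (1 - s'^2)) in *. set (b' := sqrt (beta^2 - s'^2)) in *.
  apply (lip_core (p t x) (q t) (s/a) (s'/a') (s/b) (s'/b') x y s s'); try lra.
  - split; [apply Rmult_le_pos; [lra| left; apply Rinv_0_lt_compat; lra]|].
    apply Rmult_lt_reg_r with a'; auto. unfold Rdiv. rewrite Rmult_assoc, Rinv_l by lra. lra.
  - rewrite Ey at 1. unfold p, Rdiv. ring.
  - intros l. split; [apply mono1; lra| apply (mono2 (beta^2)); lra].
  - intros l. split; [apply mono1; lra| apply (mono2 (beta^2)); lra].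
Qed.

Lemma D_lip t beta x y : 0 < t -> 1 < beta -> 0 < x -> 0 < y ->
  Rabs (Df t beta y - Df t beta x) <= 2 * Rabs (sigmat t beta y - sigmat t beta x).
Proof.
  intros ht hb hx hy.
  destruct (dec t beta x _ ht hb hx (sig_spec t beta x ht hb hx)) as (s0 & s1 & ha & ea & hb0 & eb & sa & Ex).
  destruct (dec t beta y _ ht hb hy (sig_spec t beta y ht hb hy)) as (s0' & s1' & ha' & ea' & hb0' & eb' & sa' & Ey).
  unfold Df.
  set (s := sigmat t beta x) in *. set (s' := sigmat t beta y) in *.
  set (a := sqrt (1 - s^2)) in *. set (a' := sqrt (1 - s'^2)) in *.
  assert (K : Rabs (a' - a) <= Rabs (s' - s)).
  { apply Rsqr_le_abs_0. unfold Rsqr.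
    assert (I : (a'-a)*(a'-a)*((a'+a)*(a'+a)) = (s'-s)*(s'-s)*((s'+s)*(s'+s))).
    { replace ((a'-a)*(a'-a)*((a'+a)*(a'+a))) with ((a'*a' - a*a)*(a'*a'-a*a)) by ring.
      replace (a'*a') with (1 - s'*s') by lra. replace (a*a) with (1 - s*s) by lra. ring. }
    assert (J : (s'+s)*(s'+s) <= (a'+a)*(a'+a)) by nra.
    assert (0 <= (s'-s)*(s'-s)) by apply Rle_0_sqr.
    assert (I2 : (a'-a)*(a'-a)*((a'+a)*(a'+a)) <= (s'-s)*(s'-s)*((a'+a)*(a'+a))).
    { rewrite I. apply Rmult_le_compat_l; auto. }
    apply Rmult_le_reg_r with ((a'+a)*(a'+a)); nra. }
  replace (a' + s' - sqrt 2 - (a + s - sqrt 2)) with ((a'-a) + (s'-s)) by ring.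
  eapply Rle_trans; [apply Rabs_triang|]. lra.
Qed.

Lemma deriv t beta h : 0 < t -> 1 < beta -> 0 < h ->
  derivable_pt_lim (fun h' => lt_ t beta h') h (Df t beta h).
Proof.
  intros ht hb hh eps heps.
  pose proof (p_ge t h ht) as hp.
  set (P := p t h) in *.
  assert (hd : 0 < Rmin h (eps * P / 2)).
  { apply Rmin_pos; [lra|]. apply Rmult_lt_0_compat; [apply Rmult_lt_0_compat|]; lra. }
  exists (mkposreal _ hd). simpl. intros h0 nz ab.
  assert (ab1 : Rabs h0 < h) by (eapply Rlt_le_trans; [exact ab| apply Rmin_l]).
  assert (ab2 : Rabs h0 < eps * P / 2) by (eapply Rlt_le_trans; [exact ab| apply Rmin_r]).
  assert (hy : 0 < h + h0) by (destruct (Rcase_abs h0); [rewrite Rabs_left in ab1 by lra| rewrite Rabs_right in ab1 by lra]; lra).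
  destruct (subgrad t beta h (h+h0) ht hb hh hy) as [S1 _].
  destruct (subgrad t beta (h+h0) h ht hb hy hh) as [S2 _].
  pose proof (sig_lip t beta h (h+h0) ht hb hh hy) as L1.
  pose proof (D_lip t beta h (h+h0) ht hb hh hy) as L2.
  fold P in L1.
  set (E := lt_ t beta (h + h0) - lt_ t beta h - h0 * Df t beta h).
  set (G := Df t beta (h+h0) - Df t beta h) in *.
  replace (h + h0 - h) with h0 in * by ring.
  replace (h - (h + h0)) with (-h0) in * by ring.
  assert (E1 : 0 <= E) by (unfold E; lra).
  assert (E2 : E <= h0 * G) by (unfold E, G; lra).
  assert (E3 : Rabs E <= Rabs h0 * Rabs G).
  { rewrite <- Rabs_mult. rewrite Rabs_right by lra. eapply Rle_trans; [exact E2| apply RRle_abs]. }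
  set (ds := Rabs (sigmat t beta (h + h0) - sigmat t beta h)) in *.
  assert (ha0 : 0 < Rabs h0) by (apply Rabs_pos_lt; auto).
  assert (E4 : Rabs E <= Rabs h0 * (2 * ds)).
  { eapply Rle_trans; [exact E3|]. apply Rmult_le_compat_l; lra. }
  assert (E5 : P * Rabs E <= 2 * Rabs h0 * Rabs h0).
  { assert (0 <= ds) by apply Rabs_pos.
    apply Rle_trans with (P * (Rabs h0 * (2*ds))); [apply Rmult_le_compat_l; lra|].
    replace (P * (Rabs h0 * (2*ds))) with (2 * Rabs h0 * (P * ds)) by ring.
    apply Rmult_le_compat_l; lra. }
  replace ((lt_ t beta (h + h0) - lt_ t beta h) / h0 - Df t beta h) with (E / h0)
    by (unfold E; field; auto).
  rewrite Rabs_div by auto.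
  apply Rmult_lt_reg_r with (Rabs h0); auto.
  replace (Rabs E / Rabs h0 * Rabs h0) with (Rabs E) by (field; lra).
  apply Rmult_lt_reg_l with P; [lra|].
  eapply Rle_lt_trans; [exact E5|].
  assert (2 * Rabs h0 < eps * P) by lra.
  replace (P * (eps * Rabs h0)) with ((eps * P) * Rabs h0) by ring.
  apply Rmult_lt_compat_r; auto.
Qed.

Theorem lemma3p17 (t beta : R) (ht : 0 < t) (hbeta : 1 < beta) :
  (forall x y lam, 0 < x <= 1 -> 0 < y <= 1 -> x <> y -> 0 < lam < 1 ->
     lt_ t beta (lam * x + (1 - lam) * y)
     < lam * lt_ t beta x + (1 - lam) * lt_ t beta y) /\
  (forall x y, 0 < x <= 1 -> 0 < y <= 1 -> x <= y ->
     lt_ t beta y <= lt_ t beta x) /\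
  (forall h, 0 < h <= 1 ->
     is_derive (fun h' => lt_ t beta h') h
       (sqrt (1 - sigmat t beta h ^ 2) + sigmat t beta h - sqrt 2)).
Proof.
  split; [|split].
  - intros x y lam hx hy nxy hl.
    set (z := lam * x + (1 - lam) * y).
    assert (hz : 0 < z) by (unfold z; nra).
    assert (zx : z <> x) by (unfold z; intro E; apply nxy; nra).
    assert (zy : z <> y) by (unfold z; intro E; apply nxy; nra).
    assert (n1 : sigmat t beta z <> sigmat t beta x)
      by (intro E; apply zx; apply (inj t beta); auto; lra).
    assert (n2 : sigmat t beta z <> sigmat t beta y)
      by (intro E; apply zy; apply (inj t beta); auto; lra).
    destruct (subgrad t beta z x ht hbeta hz ltac:(lra)) as [_ S1].
    destruct (subgrad t beta z y ht hbeta hz ltac:(lra)) as [_ S2].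
    specialize (S1 n1). specialize (S2 n2).
    set (Dz := Df t beta z) in *.
    assert (I1 : lam * (lt_ t beta z + (x - z) * Dz) < lam * lt_ t beta x)
      by (apply Rmult_lt_compat_l; lra).
    assert (I2 : (1 - lam) * (lt_ t beta z + (y - z) * Dz) < (1 - lam) * lt_ t beta y)
      by (apply Rmult_lt_compat_l; lra).
    assert (Id : lam * (lt_ t beta z + (x - z) * Dz) + (1 - lam) * (lt_ t beta z + (y - z) * Dz)
                 = lt_ t beta z) by (unfold z; ring).
    lra.
  - intros x y hx hy le.
    destruct (subgrad t beta y x ht hbeta ltac:(lra) ltac:(lra)) as [S _].
    pose proof (D_nonpos t beta y ht hbeta ltac:(lra)).
    assert (0 <= (x - y) * Df t beta y) by nra.
    lra.
  - intros h hh. apply is_derive_Reals. apply deriv; lra.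
Qed.
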